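(* Assume the hypotheses of the Conjugacy result stated in the context, and let $\hat\Phi$ be as defined in the context. For every $x_0\in\mathbb{R}$, no two distinct points of $\hat\Phi^{-1}(x_0)$ can be joined by a horizontal curve in $\mathbb{R}^d$.
   Context: The hypotheses of the Conjugacy result are as follows. $F:\mathbb{T}^d\to\mathbb{T}^d$ is $C^1$ with $DF$ invertible everywhere, and $F(z)=(Mz+G(z))\bmod1$ with $M$ an integer matrix and $G$ continuous and $\mathbb{Z}^d$-periodic. $M$ has an integer eigenvalue $m$ with $|m|>1$, with right and left eigenvectors $v_m^R$ and $v_m^L$, where $v_m^L$ is chosen with integer entries. $F$ has a $(K,\alpha)$-cone system with respect to $w=v_m^R/|v_m^R|$ and $W=(v_m^L)^\perp$. Cone system: write each tangent vector as $v=aw+b=(a,b)$ with $b\in W$, and set $(a',b')=DF(z)v$. With $K>1$ and $\alpha>0$, for all $z$ and all $v$ with $|b|\le\alpha|a|$ one has $|b'|<\alpha|a'|$ and $|a'|>K|a|$; and $\|DF(z)u\|<K\|u\|$ for every $u$ outside the cone. A horizontal curve is a differentiable curve whose tangent vector at every point lies in the cone $\{(a,b):|b|<\alpha|a|\}$ at that point. Let $\hat F(x)=Mx+G(x)$ and $k=\min\{|v_m^L\cdot x|:x\in\mathbb{Z}^d,\ v_m^L\cdot x\ne0\}$. Define $\hat\Phi(x)=k^{-1}\lim_{n\to\infty}m^{-n}v_m^L\cdot\hat F^n(x)$; this limit exists and $\hat\Phi$ is continuous. *)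

(* Defs.v *)
From Stdlib Require Import Reals ZArith.
From mathcomp Require Import ssreflect ssrfun ssrbool eqtype ssrnat seq fintype bigop.

Set Implicit Arguments.
Unset Strict Implicit.

Local Open Scope R_scope.

Definition vec (d : nat) := 'I_d -> R.
Definition mat (d : nat) := 'I_d -> 'I_d -> R.

Definition vsum (d : nat) (f : 'I_d -> R) : R := \big[Rplus/0]_(i < d) f i.
Definition vzero (d : nat) : vec d := fun _ => 0.
Definition vadd (d : nat) (u v : vec d) : vec d := fun i => u i + v i.
Definition vsub (d : nat) (u v : vec d) : vec d := fun i => u i - v i.
Definition vscal (d : nat) (c : R) (u : vec d) : vec d := fun i => c * u i.
Definition dot (d : nat) (u v : vec d) : R := vsum (fun i => u i * v i).
Definition vnorm (d : nat) (u : vec d) : R := sqrt (dot u u).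

Definition mapply (d : nat) (A : mat d) (v : vec d) : vec d :=
  fun i => vsum (fun j => A i j * v j).
Definition mmul (d : nat) (A B : mat d) : mat d :=
  fun i j => vsum (fun l => A i l * B l j).
Definition idm (d : nat) : mat d := fun i j => if i == j then 1 else 0.

Definition zvec (d : nat) (n : 'I_d -> Z) : vec d := fun i => IZR (n i).
Definition zmat (d : nat) (M : 'I_d -> 'I_d -> Z) : mat d := fun i j => IZR (M i j).

Definition hatF (d : nat) (M : 'I_d -> 'I_d -> Z) (G : vec d -> vec d) (x : vec d) : vec d :=
  vadd (mapply (zmat M) x) (G x).

Definition vcontinuous (d : nat) (f : vec d -> vec d) : Prop :=
  forall x eps, 0 < eps -> exists delta, 0 < delta /\
    forall y, vnorm (vsub y x) < delta -> vnorm (vsub (f y) (f x)) < eps.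

Definition frechet_deriv (d : nat) (f : vec d -> vec d) (L : mat d) (x : vec d) : Prop :=
  forall eps, 0 < eps -> exists delta, 0 < delta /\
    forall h, vnorm h < delta ->
      vnorm (vsub (vsub (f (vadd x h)) (f x)) (mapply L h)) <= eps * vnorm h.

Definition mcontinuous (d : nat) (DF : vec d -> mat d) : Prop :=
  forall x eps, 0 < eps -> exists delta, 0 < delta /\
    forall y, vnorm (vsub y x) < delta -> forall i j, Rabs (DF y i j - DF x i j) < eps.

(* Decomposition v = a w + b with b in W = vL^perp (requires vL . w <> 0) *)
Definition cone_a (d : nat) (vL w : vec d) (v : vec d) : R := dot vL v / dot vL w.
Definition cone_b (d : nat) (vL w : vec d) (v : vec d) : vec d :=
  vsub v (vscal (cone_a vL w v) w).

Definition in_cone (d : nat) (vL w : vec d) (alpha : R) (v : vec d) : Prop :=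
  vnorm (cone_b vL w v) <= alpha * Rabs (cone_a vL w v).
Definition in_open_cone (d : nat) (vL w : vec d) (alpha : R) (v : vec d) : Prop :=
  vnorm (cone_b vL w v) < alpha * Rabs (cone_a vL w v).

Definition cone_system (d : nat) (DF : vec d -> mat d) (w vL : vec d) (K alpha : R) : Prop :=
  1 < K /\ 0 < alpha /\
  forall z,
    (forall v, v <> @vzero d -> in_cone vL w alpha v ->
        in_open_cone vL w alpha (mapply (DF z) v) /\
        K * Rabs (cone_a vL w v) < Rabs (cone_a vL w (mapply (DF z) v))) /\
    (forall u, ~ in_cone vL w alpha u -> vnorm (mapply (DF z) u) < K * vnorm u).

Definition deriv01 (f : R -> R) (l t : R) : Prop :=
  forall eps, 0 < eps -> exists delta, 0 < delta /\
    forall h, h <> 0 -> Rabs h < delta -> 0 <= t + h <= 1 ->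
      Rabs ((f (t + h) - f t) / h - l) < eps.

Definition joined_by_horizontal_curve (d : nat) (vL w : vec d) (alpha : R) (x y : vec d) : Prop :=
  exists (gamma gamma' : R -> vec d),
    gamma 0 = x /\ gamma 1 = y /\
    forall t, 0 <= t <= 1 ->
      (forall i, deriv01 (fun s => gamma s i) (gamma' t i) t) /\
      in_open_cone vL w alpha (gamma' t).

(* The sequence whose limit defines hatPhi(x) *)
Definition Phi_seq (d : nat) (M : 'I_d -> 'I_d -> Z) (G : vec d -> vec d)
    (m : Z) (vL : 'I_d -> Z) (k : R) (x : vec d) (n : nat) : R :=
  / k * (/ (IZR m ^ n) * dot (zvec vL) (iter n (hatF M G) x)).

(* Main.v *)
Require Import Defs.
From Stdlib Require Import Reals Lra.
From HB Require Import structures.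
From mathcomp Require Import all_boot all_order all_algebra.
From mathcomp Require Import boolp classical_sets reals topology normedtype.
From mathcomp Require Import Rstruct Rstruct_topology.
Set Implicit Arguments.
Unset Strict Implicit.
Local Open Scope R_scope.

Lemma vsum_add d (f g : 'I_d -> R) : vsum (fun i => f i + g i) = vsum f + vsum g.
Proof. by rewrite /vsum big_split. Qed.
Lemma vsum_scal d c (f : 'I_d -> R) : vsum (fun i => c * f i) = c * vsum f.
Proof. by rewrite /vsum big_distrr. Qed.
Lemma vsum_exch d (F : 'I_d -> 'I_d -> R) : vsum (fun i => vsum (fun j => F i j)) = vsum (fun j => vsum (fun i => F i j)).
Proof. by rewrite /vsum exchange_big. Qed.
Lemma vsum_ge_term d (f : 'I_d -> R) j : (forall i, 0 <= f i) -> f j <= vsum f.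
Proof.
move=> h; rewrite /vsum (bigD1 j) //=.
have : 0 <= \big[Rplus/0]_(i < d | i != j) f i.
  by apply: (big_ind (fun x => 0 <= x)) => //; [lra| move=> *; lra].
move=> H; rewrite -{1}(Rplus_0_r (f j)); apply: Rplus_le_compat_l; exact: H.
Qed.
Lemma vsum_ext d (f g : 'I_d -> R) : (forall i, f i = g i) -> vsum f = vsum g.
Proof. by move=> h; rewrite /vsum; apply: eq_bigr => i _. Qed.
Lemma vsum_le d (f g : 'I_d -> R) : (forall i, f i <= g i) -> vsum f <= vsum g.
Proof.
move=> h; rewrite /vsum; apply: (big_rec2 (fun a b => a <= b)) => [|i a b _ hab]; first lra.
by apply: Rplus_le_compat.
Qed.
Lemma vsum_ge0 d (f : 'I_d -> R) : (forall i, 0 <= f i) -> 0 <= vsum f.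
Proof. move=> h; rewrite /vsum; apply: (big_ind (fun x => 0 <= x)) => //; [lra| move=> *; lra]. Qed.
Lemma Rabs_vsum d (f : 'I_d -> R) : Rabs (vsum f) <= vsum (fun i => Rabs (f i)).
Proof.
rewrite /vsum; apply: (big_rec2 (fun a b => Rabs a <= b)) => [|i a b _ hab].
  rewrite Rabs_R0; lra.
apply: Rle_trans (Rabs_triang _ _) _; lra.
Qed.
Lemma vsum_zero d : vsum (fun _ : 'I_d => 0) = 0.
Proof. by rewrite /vsum big1. Qed.
Lemma vsum_sub d (f g : 'I_d -> R) : vsum (fun i => f i - g i) = vsum f - vsum g.
Proof.
have -> : vsum (fun i => f i - g i) = vsum (fun i => f i + (-1) * g i) by apply: vsum_ext => i; ring.
rewrite vsum_add vsum_scal; ring.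
Qed.

Definition n1 d (u : vec d) := vsum (fun i => Rabs (u i)).
Definition Dn d := vsum (fun _ : 'I_d => 1).
Definition CL d (L : mat d) := vsum (fun i => vsum (fun j => Rabs (L i j))).

Lemma n1_ge0 d (u : vec d) : 0 <= n1 u.
Proof. apply: vsum_ge0 => i; exact: Rabs_pos. Qed.
Lemma comp_le_n1 d (u : vec d) i : Rabs (u i) <= n1 u.
Proof. apply: vsum_ge_term => j; exact: Rabs_pos. Qed.
Lemma n1_sub d (u v : vec d) : n1 (vsub u v) <= n1 u + n1 v.
Proof.
rewrite /n1 -vsum_add; apply: vsum_le => i; rewrite /vsub.
apply: Rle_trans (Rabs_triang _ _) _; rewrite Rabs_Ropp; lra.
Qed.
Lemma n1_add d (u v : vec d) : n1 (vadd u v) <= n1 u + n1 v.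
Proof.
rewrite /n1 -vsum_add; apply: vsum_le => i; exact: Rabs_triang.
Qed.
Lemma n1_scal d c (u : vec d) : n1 (vscal c u) = Rabs c * n1 u.
Proof. rewrite /n1 -vsum_scal; apply: vsum_ext => i; exact: Rabs_mult. Qed.
Lemma Dn_ge0 d : 0 <= Dn d.
Proof. apply: vsum_ge0 => _; lra. Qed.
Lemma vnorm_ge0 d (u : vec d) : 0 <= vnorm u.
Proof. exact: sqrt_pos. Qed.
Lemma sq_abs x : x * x = Rabs x * Rabs x.
Proof. by rewrite -Rabs_mult Rabs_pos_eq //; apply: Rle_0_sqr. Qed.
Lemma comp_le_vnorm d (u : vec d) i : Rabs (u i) <= vnorm u.
Proof.
rewrite /vnorm -sqrt_Rsqr_abs; apply: sqrt_le_1_alt.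
rewrite /Rsqr /dot; apply: (@vsum_ge_term _ (fun i => u i * u i)) => j.
exact: Rle_0_sqr.
Qed.
Lemma vnorm_le_n1 d (u : vec d) : vnorm u <= n1 u.
Proof.
rewrite /vnorm -(sqrt_Rsqr (n1 u)); last exact: n1_ge0.
apply: sqrt_le_1_alt; rewrite /Rsqr /dot.
rewrite [X in _ <= X * _]/n1 Rmult_comm -vsum_scal.
apply: vsum_le => i; rewrite sq_abs Rmult_comm.
apply: Rmult_le_compat_l; [exact: Rabs_pos | exact: comp_le_n1].
Qed.
Lemma n1_le_vnorm d (u : vec d) : n1 u <= Dn d * vnorm u.
Proof.
rewrite /Dn Rmult_comm -vsum_scal; apply: vsum_le => i.
rewrite Rmult_1_r; exact: comp_le_vnorm.
Qed.
Lemma dot_bound d (u v : vec d) : Rabs (dot u v) <= n1 u * n1 v.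
Proof.
apply: Rle_trans (Rabs_vsum _) _.
rewrite [X in _ <= X * _]/n1 Rmult_comm -vsum_scal.
apply: vsum_le => i; rewrite Rabs_mult Rmult_comm.
apply: Rmult_le_compat_r; [exact: Rabs_pos | exact: comp_le_n1].
Qed.
Lemma mapply_bound d (L : mat d) u : n1 (mapply L u) <= CL L * n1 u.
Proof.
rewrite /CL Rmult_comm -vsum_scal; apply: vsum_le => i.
apply: Rle_trans (Rabs_vsum _) _.
rewrite -vsum_scal; apply: vsum_le => j.
rewrite Rabs_mult [X in _ <= X]Rmult_comm; apply: Rmult_le_compat_l; [exact: Rabs_pos | exact: comp_le_n1].
Qed.
Lemma dot_sub d (u a b : vec d) : dot u (vsub a b) = dot u a - dot u b.
Proof. rewrite /dot -vsum_sub; apply: vsum_ext => i; rewrite /vsub; ring. Qed.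
Lemma dot_add d (u a b : vec d) : dot u (vadd a b) = dot u a + dot u b.
Proof. rewrite /dot -vsum_add; apply: vsum_ext => i; rewrite /vadd; ring. Qed.
Lemma dot_scal d (u a : vec d) c : dot u (vscal c a) = c * dot u a.
Proof. rewrite /dot -vsum_scal; apply: vsum_ext => i; rewrite /vscal; ring. Qed.
Lemma dot_scal_l d (u a : vec d) c : dot (vscal c u) a = c * dot u a.
Proof. rewrite /dot -vsum_scal; apply: vsum_ext => i; rewrite /vscal; ring. Qed.
Lemma dot_zero d (u : vec d) : dot u (@vzero d) = 0.
Proof. rewrite /dot -(vsum_zero d); apply: vsum_ext => i; rewrite /vzero; ring. Qed.
Lemma mapply_sub d (L : mat d) a b : mapply L (vsub a b) = vsub (mapply L a) (mapply L b).
Proof. apply: funext => i; rewrite /mapply /vsub -vsum_sub; apply: vsum_ext => j; ring. Qed.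
Lemma mapply_scal d (L : mat d) c a : mapply L (vscal c a) = vscal c (mapply L a).
Proof. apply: funext => i; rewrite /mapply /vscal -vsum_scal; apply: vsum_ext => j; ring. Qed.
Lemma vnorm0_eq d (u : vec d) : vnorm u = 0 -> u = @vzero d.
Proof.
move=> h; apply: funext => i; rewrite /vzero.
have := comp_le_vnorm u i; rewrite h => H.
have := Rabs_pos (u i) => H2.
by case: (Req_dec (u i) 0) => // hn; have := Rabs_pos_lt _ hn; lra.
Qed.

Lemma frac_lt e a : 0 < e -> 0 <= a -> a * (e / (a + 1)) < e.
Proof.
move=> e0 a0.
have -> : a * (e / (a + 1)) = e - e / (a + 1) by field; lra.
have : 0 < e / (a + 1) by apply: Rdiv_lt_0_compat; lra.
lra.
Qed.
Lemma frac_pos e a : 0 < e -> 0 <= a -> 0 < e / (a + 1).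
Proof. move=> e0 a0; apply: Rdiv_lt_0_compat; lra. Qed.

Definition vderiv d (c : R -> vec d) (v : vec d) (t : R) : Prop :=
  forall eps, 0 < eps -> exists delta, 0 < delta /\
    forall h, h <> 0 -> Rabs h < delta -> 0 <= t + h <= 1 ->
      n1 (vsub (vsub (c (t + h)) (c t)) (vscal h v)) <= eps * Rabs h.

Lemma fin_delta d (P : 'I_d -> R -> Prop) :
  (forall i a b, 0 < a <= b -> P i b -> P i a) ->
  (forall i, exists delta, 0 < delta /\ P i delta) ->
  exists delta, 0 < delta /\ forall i, P i delta.
Proof.
move=> mono h.
suff: forall s : seq 'I_d, exists delta, 0 < delta /\ forall i, i \in s -> P i delta.
  case/(_ (enum 'I_d)) => dl [dl0 H]; exists dl; split => // i; apply: H; by rewrite mem_enum.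
elim=> [|a s [dl [dl0 H]]]; first by exists 1; split => //; lra.
have [da [da0 Ha]] := h a.
exists (Rmin dl da); split; first by apply: Rmin_pos.
move=> i; rewrite inE => /orP [/eqP -> | his].
  apply: (mono a _ da) => //; split; [apply: Rmin_pos => // | apply: Rmin_r].
apply: (mono i _ dl); last by apply: H.
split; [apply: Rmin_pos => // | apply: Rmin_l].
Qed.

Lemma comp_to_vderiv d (c : R -> vec d) v t :
  (forall i, deriv01 (fun s => c s i) (v i) t) -> vderiv c v t.
Proof.
move=> hc eps eps0.
have hD := Dn_ge0 d.
set e' := eps / (Dn d + 1).
have e'0 : 0 < e' by apply: frac_pos.
pose P := fun i dl => forall h, h <> 0 -> Rabs h < dl -> 0 <= t + h <= 1 -> Rabs ((c (t + h) i - c t i) / h - v i) < e'.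
have hmono : forall i a b, 0 < a <= b -> P i b -> P i a.
  move=> i a b [a0 ab] Hb h h0 ha ht; apply: Hb => //; lra.
have hex : forall i, exists delta, 0 < delta /\ P i delta.
  move=> i; exact: hc.
have [dl [dl0 H]] := fin_delta hmono hex.
exists dl; split => // h h0 hd ht.
apply: Rle_trans (_ : vsum (fun _ : 'I_d => e' * Rabs h) <= _).
  apply: vsum_le => i; rewrite /vsub /vscal.
  have := H i h h0 hd ht.
  have -> : c (t + h) i - c t i - h * v i = h * ((c (t + h) i - c t i) / h - v i) by field.
  rewrite Rabs_mult => H1; rewrite Rmult_comm; apply: Rmult_le_compat_r; [exact: Rabs_pos | lra].
have -> : vsum (fun _ : 'I_d => e' * Rabs h) = (Dn d * e') * Rabs h.
  transitivity ((e' * Rabs h) * Dn d); last ring.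
  by rewrite /Dn -vsum_scal; apply: vsum_ext => _; ring.
apply: Rmult_le_compat_r; first exact: Rabs_pos.
have := frac_lt eps0 hD; rewrite -/e'; lra.
Qed.

Lemma vderiv_dot d (u : vec d) c v t : vderiv c v t -> deriv01 (fun s => dot u (c s)) (dot u v) t.
Proof.
move=> hc eps eps0.
have hu := n1_ge0 u.
have e0 : 0 < eps / (n1 u + 1) by apply: frac_pos.
have [dl [dl0 H]] := hc _ e0.
exists dl; split => // h h0 hd ht.
have H1 := H h h0 hd ht.
have -> : (dot u (c (t+h)) - dot u (c t)) / h - dot u v = dot u (vsub (vsub (c (t + h)) (c t)) (vscal h v)) / h.
  by rewrite !dot_sub dot_scal; field.
have hh : 0 < Rabs h by apply: Rabs_pos_lt.
rewrite /Rdiv Rabs_mult Rabs_inv.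
apply: Rle_lt_trans (_ : n1 u * (eps / (n1 u + 1)) < _); last exact: frac_lt.
apply: Rle_trans (_ : (n1 u * (eps / (n1 u + 1) * Rabs h)) * / Rabs h <= _).
  apply: Rmult_le_compat_r; first by left; apply: Rinv_0_lt_compat.
  apply: Rle_trans (dot_bound _ _) _.
  apply: Rmult_le_compat_l => //.
right; field; lra.
Qed.

Lemma chain_vderiv d (F : vec d -> vec d) (L : mat d) (c : R -> vec d) v t :
  vderiv c v t -> frechet_deriv F L (c t) -> vderiv (fun s => F (c s)) (mapply L v) t.
Proof.
move=> hc hF eps eps0.
have hD := Dn_ge0 d.
have hv := n1_ge0 v.
have hCL : 0 <= CL L by apply: vsum_ge0 => i; apply: vsum_ge0 => j; apply: Rabs_pos.
set A := 1 + n1 v.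
have A0 : 0 < A by rewrite /A; lra.
set e2 := (eps / 2) / (Dn d + 1) / A.
have e20 : 0 < e2 by rewrite /e2; apply: Rdiv_lt_0_compat => //; apply: frac_pos => //; lra.
set e1 := Rmin 1 ((eps / 2) / (CL L + 1)).
have e10 : 0 < e1 by rewrite /e1; apply: Rmin_pos; [lra | apply: frac_pos => //; lra].
have [dF [dF0 HF]] := hF e2 e20.
have [d1 [d10 H1]] := hc e1 e10.
exists (Rmin d1 (dF / A)); split.
  by apply: Rmin_pos => //; apply: Rdiv_lt_0_compat.
move=> h h0 hd ht.
have hd1 : Rabs h < d1 by apply: Rlt_le_trans hd (Rmin_l _ _).
have hd2 : Rabs h < dF / A by apply: Rlt_le_trans hd (Rmin_r _ _).
have hh := Rabs_pos h.
set D := vsub (c (t + h)) (c t).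
have E1 := H1 h h0 hd1 ht.
rewrite -/D in E1.
have nD : n1 D <= A * Rabs h.
  have -> : D = vadd (vsub D (vscal h v)) (vscal h v).
    by apply: funext => i; rewrite /vadd /vsub /vscal; ring.
  apply: Rle_trans (n1_add _ _) _; rewrite n1_scal.
  have : e1 <= 1 by apply: Rmin_l.
  rewrite /A; nra.
have vD : vnorm D < dF.
  apply: Rle_lt_trans (vnorm_le_n1 _) _.
  apply: Rle_lt_trans nD _.
  have -> : dF = A * (dF / A) by field; lra.
  by apply: Rmult_lt_compat_l.
have Hc : c (t + h) = vadd (c t) D.
  by apply: funext => i; rewrite /vadd /D /vsub; ring.
have HF1 := HF D vD; rewrite -Hc in HF1.
have -> : vsub (vsub (F (c (t + h))) (F (c t))) (vscal h (mapply L v)) =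
   vadd (vsub (vsub (F (c (t + h))) (F (c t))) (mapply L D)) (mapply L (vsub D (vscal h v))).
  rewrite mapply_sub mapply_scal.
  by apply: funext => i; rewrite /vadd /vsub /vscal; ring.
apply: Rle_trans (n1_add _ _) _.
have P1 : n1 (vsub (vsub (F (c (t + h))) (F (c t))) (mapply L D)) <= (eps / 2) * Rabs h.
  apply: Rle_trans (n1_le_vnorm _) _.
  apply: Rle_trans (_ : Dn d * (e2 * vnorm D) <= _).
    by apply: Rmult_le_compat_l.
  apply: Rle_trans (_ : Dn d * (e2 * (A * Rabs h)) <= _).
    apply: Rmult_le_compat_l => //; apply: Rmult_le_compat_l; first lra.
    apply: Rle_trans (vnorm_le_n1 _) nD.
  have -> : Dn d * (e2 * (A * Rabs h)) = (Dn d * ((eps / 2) / (Dn d + 1))) * Rabs h.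
    by rewrite /e2; field; lra.
  apply: Rmult_le_compat_r => //; left; apply: frac_lt => //; lra.
have P2 : n1 (mapply L (vsub D (vscal h v))) <= (eps / 2) * Rabs h.
  apply: Rle_trans (mapply_bound _ _) _.
  apply: Rle_trans (_ : CL L * (e1 * Rabs h) <= _).
    by apply: Rmult_le_compat_l.
  have : e1 <= (eps / 2) / (CL L + 1) by apply: Rmin_r.
  have := frac_lt (e := eps / 2) (a := CL L) ltac:(lra) hCL.
  move=> Ha Hb.
  have : CL L * e1 <= eps / 2.
    apply: Rle_trans (_ : CL L * ((eps / 2) / (CL L + 1)) <= _); last lra.
    by apply: Rmult_le_compat_l.
  nra.
lra.
Qed.

Definition clamp t := Rmax 0 (Rmin 1 t).
Lemma clamp_in t : 0 <= clamp t <= 1.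
Proof. rewrite /clamp /Rmax /Rmin; repeat case: Rle_dec => /=; lra. Qed.
Lemma clamp_id t : 0 <= t <= 1 -> clamp t = t.
Proof. rewrite /clamp /Rmax /Rmin; repeat case: Rle_dec => /=; lra. Qed.
Lemma clamp_lip t c : 0 <= c <= 1 -> Rabs (clamp t - c) <= Rabs (t - c).
Proof. rewrite /clamp /Rmax /Rmin; repeat case: Rle_dec => /=; split_Rabs; lra. Qed.

Lemma deriv01_bound f l c : deriv01 f l c -> exists dl, 0 < dl /\
  forall h, Rabs h < dl -> 0 <= c + h <= 1 -> Rabs (f (c + h) - f c) <= (Rabs l + 1) * Rabs h.
Proof.
move=> hf; have [dl [dl0 H]] := hf 1 Rlt_0_1.
exists dl; split => // h hh hc.
case: (Req_dec h 0) => [->|h0].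
  rewrite Rplus_0_r; have := Rabs_pos l; split_Rabs; nra.
have H1 := H h h0 hh hc.
have -> : f (c + h) - f c = h * ((f (c + h) - f c) / h - l) + h * l by field.
apply: Rle_trans (Rabs_triang _ _) _.
rewrite !Rabs_mult.
have := Rmult_le_compat_l (Rabs h) _ _ (Rabs_pos h) (Rlt_le _ _ H1); lra.
Qed.

Lemma mvt01 f f' : (forall t, 0 <= t <= 1 -> deriv01 f (f' t) t) ->
  exists c, 0 <= c <= 1 /\ f 1 - f 0 = f' c.
Proof.
move=> hf.
pose F := fun t => f (clamp t).
have dF : forall c, 0 < c < 1 -> derivable_pt_lim F c (f' c).
  move=> c hc eps eps0.
  have [dl [dl0 H]] := hf c ltac:(lra) eps eps0.
  have p : 0 < Rmin dl (Rmin c (1 - c)) by repeat apply: Rmin_pos; lra.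
  exists (mkposreal _ p) => h h0 /= hh.
  have h1 := Rmin_l dl (Rmin c (1 - c)).
  have h2 := Rmin_r dl (Rmin c (1 - c)).
  have h3 := Rmin_l c (1 - c).
  have h4 := Rmin_r c (1 - c).
  have hb : 0 <= c + h <= 1 by move: hh; split_Rabs; lra.
  rewrite /F clamp_id // clamp_id; last lra.
  apply: H => //; lra.
have cF : forall c, 0 <= c <= 1 -> continuity_pt F c.
  move=> c hc eps eps0.
  have [dl [dl0 H]] := deriv01_bound (hf c hc).
  set l := f' c in H.
  have la : 0 < Rabs l + 1 by have := Rabs_pos l; lra.
  exists (Rmin dl (eps / (Rabs l + 1))); split.
    by apply: Rmin_pos => //; apply: Rdiv_lt_0_compat.
  move=> x [_ hx]; rewrite /R_dist /= /R_dist in hx *.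
  have hx1 : Rabs (x - c) < dl by apply: Rlt_le_trans hx (Rmin_l _ _).
  have hx2 : Rabs (x - c) < eps / (Rabs l + 1) by apply: Rlt_le_trans hx (Rmin_r _ _).
  have hcl := clamp_lip x hc.
  have := H (clamp x - c) ltac:(lra).
  have -> : c + (clamp x - c) = clamp x by ring.
  move=> /(_ (clamp_in x)).
  rewrite /F (clamp_id hc) => H2.
  apply: Rle_lt_trans H2 _.
  have -> : eps = (Rabs l + 1) * (eps / (Rabs l + 1)) by field; lra.
  apply: Rmult_lt_compat_l => //; lra.
pose pr1 := fun c (hc : 0 < c < 1) => exist (fun l => derivable_pt_abs F c l) (f' c) (dF c hc).
pose pr2 := fun c (hc : 0 < c < 1) => derivable_pt_id c.
have [c [P E]] := MVT F id 0 1 pr1 pr2 Rlt_0_1 cF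
  (fun c _ => derivable_continuous_pt _ _ (derivable_pt_id c)).
exists c; split; first lra.
move: E; rewrite (derive_pt_eq_0 _ _ _ _ (dF c P)).
rewrite (derive_pt_eq_0 _ _ _ _ (derivable_pt_lim_id c)).
rewrite /F clamp_id; last lra; rewrite clamp_id; last lra.
rewrite /id => E; lra.
Qed.

Lemma deriv01_comb f g a b p q t : deriv01 f a t -> deriv01 g b t ->
  deriv01 (fun s => p * f s + q * g s) (p * a + q * b) t.
Proof.
move=> hf hg eps eps0.
have hp := Rabs_pos p; have hq := Rabs_pos q.
have [d1 [d10 H1]] := hf _ (frac_pos (e := eps / 2) ltac:(lra) hp).
have [d2 [d20 H2]] := hg _ (frac_pos (e := eps / 2) ltac:(lra) hq).
exists (Rmin d1 d2); split; first by apply: Rmin_pos.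
move=> h h0 hh ht.
have := H1 h h0 (Rlt_le_trans _ _ _ hh (Rmin_l _ _)) ht.
have := H2 h h0 (Rlt_le_trans _ _ _ hh (Rmin_r _ _)) ht.
have -> : (p * f (t + h) + q * g (t + h) - (p * f t + q * g t)) / h - (p * a + q * b)
  = p * ((f (t + h) - f t) / h - a) + q * ((g (t + h) - g t) / h - b) by field.
move=> Hg Hf.
apply: Rle_lt_trans (Rabs_triang _ _) _.
rewrite !Rabs_mult.
have A1 := frac_lt (e := eps / 2) (a := Rabs p) ltac:(lra) hp.
have A2 := frac_lt (e := eps / 2) (a := Rabs q) ltac:(lra) hq.
have B1 : Rabs p * Rabs ((f (t + h) - f t) / h - a) <= Rabs p * (eps / 2 / (Rabs p + 1)).
  by apply: Rmult_le_compat_l => //; lra.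
have B2 : Rabs q * Rabs ((g (t + h) - g t) / h - b) <= Rabs q * (eps / 2 / (Rabs q + 1)).
  by apply: Rmult_le_compat_l => //; lra.
lra.
Qed.

Lemma bounded_cube d (g : ('I_d -> R) -> R) :
 (forall x eps, 0 < eps -> exists delta, 0 < delta /\ forall y, (forall i, Rabs (y i - x i) < delta) -> Rabs (g y - g x) < eps) ->
 exists C, forall x, (forall i, 0 <= x i <= 1) -> Rabs (g x) <= C.
Proof.
move=> hc.
pose psi := fun v : 'rV[R]_d => (g (fun i => v ord0 i) : R^o).
have cpsi : continuous psi.
  move=> v A /= /nbhs_ballP [e /RltP e0 He].
  have [dl [dl0 H]] := hc (fun i => v ord0 i) e e0.
  apply/nbhs_ballP; exists dl => /=; first by apply/RltP.
  move=> u [_ uv]; apply: He.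
  rewrite /ball /=; apply/RltP.
  change (Rabs (psi v - psi u) < e); rewrite -Rabs_Ropp Ropp_minus_distr; apply: H => i.
  move: (uv ord0 i); rewrite /ball /= => /RltP.
  by rewrite -Rabs_Ropp Ropp_minus_distr.
have cA := @rV_compact R d (fun _ => `[(0:R)%R, (1:R)%R]%classic) (fun _ => @segment_compact R _ _).
have := compact_bounded (continuous_compact (continuous_subspaceT cpsi) cA).
case=> M [_ HM].
exists (Rmax M 0 + 1) => x hx.
have Mlt : M < Rmax M 0 + 1.
  have := Rmax_l M 0; lra.
have Mlt' : (M < Rmax M 0 + 1)%R by apply/RltP.
have := HM _ Mlt' (psi (\row_j x j)%R).
rewrite /psi => H; have := H (ex_intro2 _ _ (\row_j x j)%R _ erefl).
have ex : (fun i => (\row_j x j)%R ord0 i) = x.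
  by apply: funext => i; rewrite mxE.
move=> H2.
have Hin : forall i, `[(0:R)%R, (1:R)%R]%classic ((\row_j x j)%R ord0 i).
  move=> i; rewrite /= mxE in_itv /=; apply/andP; split; apply/RleP; apply (hx i).
move: (H2 Hin); rewrite /= ex => h.
by apply/RleP.
Qed.
Lemma bounded_periodic d (g : vec d -> R) :
 (forall x eps, 0 < eps -> exists delta, 0 < delta /\ forall y, (forall i, Rabs (y i - x i) < delta) -> Rabs (g y - g x) < eps) ->
 (forall x (n : 'I_d -> Z), g (vadd x (zvec n)) = g x) ->
 exists C, forall x, Rabs (g x) <= C.
Proof.
move=> hc hp.
have [C HC] := bounded_cube hc.
exists C => x.
pose n := fun i => Int_part (x i).
have -> : x = vadd (vsub x (zvec n)) (zvec n).
  by apply: funext => i; rewrite /vadd /vsub; ring.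
rewrite hp; apply: HC => i; rewrite /vsub /zvec /n.
have := base_Int_part (x i); lra.
Qed.

Lemma ell_hatF d (M : 'I_d -> 'I_d -> Z) (G : vec d -> vec d) (m : Z) (vL : 'I_d -> Z) z :
  (forall j, vsum (fun i => IZR (vL i) * IZR (M i j)) = IZR m * IZR (vL j)) ->
  dot (zvec vL) (hatF M G z) = IZR m * dot (zvec vL) z + dot (zvec vL) (G z).
Proof.
move=> hL; rewrite /hatF dot_add; congr (_ + _).
rewrite /dot /mapply /zmat /zvec.
have -> : vsum (fun i => IZR (vL i) * vsum (fun j => IZR (M i j) * z j)) =
          vsum (fun i => vsum (fun j => IZR (vL i) * IZR (M i j) * z j)).
  apply: vsum_ext => i; rewrite -vsum_scal; apply: vsum_ext => j; ring.
rewrite vsum_exch -vsum_scal; apply: vsum_ext => j.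
have -> : vsum (fun i => IZR (vL i) * IZR (M i j) * z j) = z j * vsum (fun i => IZR (vL i) * IZR (M i j)).
  rewrite -vsum_scal; apply: vsum_ext => i; ring.
rewrite hL; ring.
Qed.

Unset Implicit Arguments.
Local Open Scope R_scope.

Theorem mainTheorem5 (d : nat) (M : 'I_d -> 'I_d -> Z) (G : vec d -> vec d)
  (DF : vec d -> mat d) (m : Z) (vR : vec d) (vL : 'I_d -> Z) (K alpha k : R)
  (* G continuous and Z^d-periodic *)
  (hG_cont : vcontinuous G)
  (hG_per : forall (x : vec d) (n : 'I_d -> Z), G (vadd x (zvec n)) = G x)
  (* F is C^1 with derivative DF, invertible everywhere *)
  (hDF : forall x, frechet_deriv (hatF M G) (DF x) x)
  (hDF_cont : mcontinuous DF)
  (hDF_inv : forall x, exists N : mat d, mmul N (DF x) = @idm d /\ mmul (DF x) N = @idm d)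
  (* integer eigenvalue m, |m| > 1, right/left eigenvectors, vL integer *)
  (hm : 1 < Rabs (IZR m))
  (hvR : vR <> @vzero d)
  (hvR_eig : mapply (zmat M) vR = vscal (IZR m) vR)
  (hvL : zvec vL <> @vzero d)
  (hvL_eig : forall j, vsum (fun i => IZR (vL i) * IZR (M i j)) = IZR m * IZR (vL j))
  (* R^d = span(w) (+) W, needed for the decomposition v = a w + b *)
  (hdec : dot (zvec vL) vR <> 0)
  (* (K,alpha)-cone system w.r.t. w = vR/|vR| and W = vL^perp *)
  (hcone : cone_system DF (vscal (/ vnorm vR) vR) (zvec vL) K alpha)
  (* k = min { |vL . x| : x in Z^d, vL . x <> 0 } *)
  (hk_att : exists n : 'I_d -> Z, dot (zvec vL) (zvec n) <> 0 /\ Rabs (dot (zvec vL) (zvec n)) = k)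
  (hk_min : forall n : 'I_d -> Z, dot (zvec vL) (zvec n) <> 0 -> k <= Rabs (dot (zvec vL) (zvec n))) :
  forall (x0 : R) (x y : vec d),
    Un_cv (Phi_seq M G m vL k x) x0 ->
    Un_cv (Phi_seq M G m vL k y) x0 ->
    x <> y ->
    ~ joined_by_horizontal_curve (zvec vL) (vscal (/ vnorm vR) vR) alpha x y.
Proof.
move=> x0 x y cvx cvy hxy [ga [ga' [g0 [g1 Hg]]]].
set w := vscal (/ vnorm vR) vR in Hg hcone *.
set lv := zvec vL in Hg hcone *.
have nR : vnorm vR <> 0 by move=> h; apply: hvR; apply: vnorm0_eq.
have c0nz : dot lv w <> 0.
  rewrite /w dot_scal; apply: Rmult_integral_contrapositive_currified => //.
  exact: Rinv_neq_0_compat.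
set c0 := dot lv w in c0nz.
have ell_a : forall v, dot lv v = c0 * cone_a lv w v.
  by move=> v; rewrite /cone_a -/c0; field.
have open_a : forall v, in_open_cone lv w alpha v -> cone_a lv w v <> 0.
  move=> v; rewrite /in_open_cone => h ha; rewrite ha Rabs_R0 Rmult_0_r in h.
  have := vnorm_ge0 (cone_b lv w v); lra.
have open_nz : forall v, in_open_cone lv w alpha v -> v <> @vzero d.
  move=> v h hv; apply: (open_a v h); rewrite hv /cone_a dot_zero /Rdiv; ring.
case: hcone => K1 [alpha0 HC].
have k0 : 0 < k.
  case: hk_att => n [h1 h2]; rewrite -h2; exact: Rabs_pos_lt.
pose cn n s := iter n (hatF M G) (ga s).
pose vn := fix vn (n : nat) (t : R) {struct n} : vec d :=
  match n with O => ga' t | S n' => mapply (DF (cn n' t)) (vn n' t) end.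
have key : forall n t, 0 <= t <= 1 -> vderiv (cn n) (vn n t) t /\
   in_open_cone lv w alpha (vn n t) /\
   K ^ n * Rabs (cone_a lv w (ga' t)) <= Rabs (cone_a lv w (vn n t)).
  elim=> [|n IH] t ht.
    have [Hd Hc] := Hg t ht; split; first exact: comp_to_vderiv.
    split => //; rewrite /= Rmult_1_l; lra.
  have [Hd [Hc Hk]] := IH t ht.
  have [Hc' Hk'] := (HC (cn n t)).1 (vn n t) (open_nz _ Hc) (Rlt_le _ _ Hc).
  split; first exact: (chain_vderiv Hd (hDF (cn n t))).
  split => //.
  have -> : K ^ n.+1 * Rabs (cone_a lv w (ga' t)) = K * (K ^ n * Rabs (cone_a lv w (ga' t))) by rewrite /=; ring.
  have : K * (K ^ n * Rabs (cone_a lv w (ga' t))) <= K * Rabs (cone_a lv w (vn n t)).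
    apply: Rmult_le_compat_l => //; lra.
  simpl vn; lra.
pose Dd n := dot lv (iter n (hatF M G) y) - dot lv (iter n (hatF M G) x).
have Dd_eq : forall n, Dd n = dot lv (cn n 1) - dot lv (cn n 0) by move=> n; rewrite /Dd /cn g0 g1.
have der : forall n t, 0 <= t <= 1 -> deriv01 (fun s => dot lv (cn n s)) (dot lv (vn n t)) t.
  move=> n t ht; exact: vderiv_dot (key n t ht).1.
have D0 : Dd 0%nat <> 0.
  have [c [hc E]] := mvt01 (der 0%nat).
  rewrite Dd_eq E ell_a; apply: Rmult_integral_contrapositive_currified => //.
  apply: open_a; exact: (key 0%nat c hc).2.1.
have grow : forall n, K ^ n * Rabs (Dd 0%nat) <= Rabs (Dd n).
  move=> n.
  have hd : forall t, 0 <= t <= 1 -> deriv01 (fun s => Dd n * dot lv (cn 0%nat s) + (- Dd 0%nat) * dot lv (cn n s))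
     (Dd n * dot lv (vn 0%nat t) + (- Dd 0%nat) * dot lv (vn n t)) t.
    move=> t ht; apply: deriv01_comb; [exact: der | exact: der].
  have [c [hc E]] := mvt01 hd.
  have E2 : Dd n * dot lv (vn 0%nat c) = Dd 0%nat * dot lv (vn n c).
    move: E; rewrite -/(Dd 0%nat) in Dd_eq *.
    have h0 := Dd_eq 0%nat; have hn := Dd_eq n.
    move=> E; nra.
  rewrite !ell_a in E2.
  have E3 : Dd n * cone_a lv w (vn 0%nat c) = Dd 0%nat * cone_a lv w (vn n c).
    move: E2; set a := cone_a lv w (vn 0%nat c); set b := cone_a lv w (vn n c) => E2.
    have H : c0 * (Dd n * a - Dd 0%nat * b) = Dd n * (c0 * a) - Dd 0%nat * (c0 * b) by ring.
    rewrite E2 Rminus_eq_0 in H.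
    case: (Rmult_integral _ _ H) => // H2; lra.
  have [_ [Hc0 _]] := key 0%nat c hc.
  have [_ [_ Hkn]] := key n c hc.
  have a0 : 0 < Rabs (cone_a lv w (vn 0%nat c)) by apply: Rabs_pos_lt; apply: open_a.
  have E4 : Rabs (Dd n) * Rabs (cone_a lv w (vn 0%nat c)) = Rabs (Dd 0%nat) * Rabs (cone_a lv w (vn n c)).
    by rewrite -!Rabs_mult E3.
  simpl vn in Hkn, a0, E4.
  apply: (Rmult_le_reg_r _ _ _ a0).
  rewrite E4.
  have := Rabs_pos (Dd 0%nat).
  move: Hkn; set A := Rabs (cone_a lv w (ga' c)); set Bn := Rabs (cone_a lv w (vn n c)).
  set E0 := Rabs (Dd 0%nat); nra.
have [C HC0] : exists C, forall z, Rabs (dot lv (G z)) <= C.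
  apply: (@bounded_periodic d (fun z => dot lv (G z))); last first.
    by move=> z n; rewrite /= hG_per.
  move=> z eps eps0.
  have hD := Dn_ge0 d.
  have hl := n1_ge0 lv.
  have hA : 0 <= n1 lv * Dn d by apply: Rmult_le_pos.
  have e1 := frac_pos eps0 hA.
  have [dl [dl0 Hd]] := hG_cont z _ e1.
  have dl1 := frac_pos dl0 hD.
  exists (dl / (Dn d + 1)); split => // u hu.
  have nu : n1 (vsub u z) <= Dn d * (dl / (Dn d + 1)).
    apply: Rle_trans (_ : vsum (fun _ : 'I_d => dl / (Dn d + 1)) <= _).
      apply: vsum_le => i; rewrite /vsub; left; exact: hu.
    right; rewrite /Dn Rmult_comm -vsum_scal; apply: vsum_ext => _; ring.
  have := frac_lt dl0 hD => fl.
  have hv : vnorm (vsub u z) < dl.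
    apply: Rle_lt_trans (vnorm_le_n1 _) _; lra.
  have HG := Hd u hv.
  rewrite -dot_sub; apply: Rle_lt_trans (dot_bound _ _) _.
  apply: (@Rle_lt_trans _ (n1 lv * (Dn d * vnorm (vsub (G u) (G z))))).
    apply: Rmult_le_compat_l => //; exact: n1_le_vnorm.
  apply: (@Rle_lt_trans _ ((n1 lv * Dn d) * (eps / (n1 lv * Dn d + 1)))); last exact: frac_lt.
  rewrite -Rmult_assoc; apply: Rmult_le_compat_l => //; lra.
have C0 : 0 <= C by have := HC0 x; have := Rabs_pos (dot lv (G x)); lra.
have rec : forall n, Dd n.+1 = IZR m * Dd n + (dot lv (G (iter n (hatF M G) y)) - dot lv (G (iter n (hatF M G) x))).
  move=> n; rewrite /Dd /= !(ell_hatF _ _ hvL_eig); rewrite -/lv; ring.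
set mm := Rabs (IZR m) in hm *.
have mm0 : 0 < mm by lra.
set B := 2 * C / (mm - 1).
have B0 : 0 <= B by rewrite /B; apply: Rmult_le_pos; [lra | left; apply: Rinv_0_lt_compat; lra].
have stepB : forall n, mm * (Rabs (Dd n) - B) <= Rabs (Dd n.+1) - B.
  move=> n; rewrite rec.
  have h1 := Rabs_triang_inv (IZR m * Dd n) (- (dot lv (G (iter n (hatF M G) y)) - dot lv (G (iter n (hatF M G) x)))).
  rewrite /Rminus Ropp_involutive in h1.
  rewrite Rabs_mult -/mm Rabs_Ropp in h1.
  have h2 := Rabs_triang (dot lv (G (iter n (hatF M G) y))) (- dot lv (G (iter n (hatF M G) x))).
  rewrite Rabs_Ropp in h2.
  have h3 := HC0 (iter n (hatF M G) y); have h4 := HC0 (iter n (hatF M G) x).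
  have hB : mm * B - B = 2 * C by rewrite /B; field; lra.
  rewrite /Rminus; lra.
have iterB : forall N j, mm ^ j * (Rabs (Dd N) - B) <= Rabs (Dd (N + j)%nat) - B.
  move=> N; elim=> [|j IH]; first by rewrite addn0 /=; lra.
  rewrite addnS; apply: Rle_trans (stepB _).
  rewrite /=; rewrite Rmult_assoc; apply: Rmult_le_compat_l; lra.
have [N HN] := Pow_x_infinity K ltac:(rewrite Rabs_pos_eq; lra) ((B + 1) / Rabs (Dd 0%nat)).
have HN1 := HN N (Nat.le_refl N).
rewrite -RPow_abs Rabs_pos_eq in HN1; last lra.
have D0p : 0 < Rabs (Dd 0%nat) by apply: Rabs_pos_lt.
have rho0 : 0 < Rabs (Dd N) - B.
  have := grow N.
  have : (B + 1) / Rabs (Dd 0%nat) * Rabs (Dd 0%nat) <= K ^ N * Rabs (Dd 0%nat).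
    apply: Rmult_le_compat_r; lra.
  have -> : (B + 1) / Rabs (Dd 0%nat) * Rabs (Dd 0%nat) = B + 1 by field; lra.
  lra.
set rho := Rabs (Dd N) - B in rho0.
have mN := pow_lt _ N mm0.
set eta := rho / (k * mm ^ N).
have eta0 : 0 < eta by apply: Rdiv_lt_0_compat => //; apply: Rmult_lt_0_compat.
have [N0 HN0] := CV_minus _ _ _ _ cvy cvx eta eta0.
have := HN0 (N + N0)%nat ltac:(apply/leP; exact: leq_addl).
rewrite /R_dist Rminus_eq_0 Rminus_0_r /Phi_seq -/lv.
have -> : / k * (/ IZR m ^ (N + N0) * dot lv (iter (N + N0) (hatF M G) y)) -
   / k * (/ IZR m ^ (N + N0) * dot lv (iter (N + N0) (hatF M G) x)) =
   / k * / IZR m ^ (N + N0) * Dd (N + N0)%nat by rewrite /Dd; ring.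
rewrite !Rabs_mult Rabs_inv Rabs_inv -RPow_abs -/mm (Rabs_pos_eq k); last lra.
have := iterB N N0.
rewrite -/rho => hI.
have mN0 := pow_lt _ N0 mm0.
have hge : mm ^ N0 * rho <= Rabs (Dd (N + N0)%nat) by lra.
have hpow : mm ^ (N + N0) = mm ^ N * mm ^ N0.
  by rewrite -pow_add.
rewrite hpow.
have -> : eta = / k * / (mm ^ N * mm ^ N0) * (mm ^ N0 * rho).
  rewrite /eta; field; split; lra.
move=> Hlt.
have : / k * / (mm ^ N * mm ^ N0) * (mm ^ N0 * rho) <= / k * / (mm ^ N * mm ^ N0) * Rabs (Dd (N + N0)%nat).
  apply: Rmult_le_compat_l => //.
  apply: Rmult_le_pos; left; [exact: Rinv_0_lt_compat | apply: Rinv_0_lt_compat; exact: Rmult_lt_0_compat].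
lra.
Qed.
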